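(* For trees $(n,s,L)$ and $(n,s',L')$, we have $(n,s,L)\sim(n,s',L')$ if and only if there exists a permutation $\sigma$ of $\{1,\dots,n\}$ such that $\sigma(L)=L'$ and $s'(\sigma(i))=\sigma(s(i))$ for all $i\in\{1,\dots,n-1\}$.
   Context: For $n\ge1$ write $\underline n=\{1,\dots,n\}$. A tree $(n,s,L)$ consists of $L\subseteq\underline n$ and a map $s:\underline{n-1}\to\underline n\setminus L$ with $s(x)>x$ for all $x$, and ($x\le y<s(x)\Rightarrow s(y)\le s(x)$). If $n\notin L$ and $\{k_1<\dots<k_m\}=s^{-1}(n)$, $k_0=0$, $n_i=k_i-k_{i-1}$, the successor trees of $(n,s,L)$ are the trees $(n_i,s_i,L_i)$, $i=1,\dots,m$, with $s_i(j)=s(j+k_{i-1})-k_{i-1}$ and $L_i=\{x-k_{i-1}\mid x\in L\}\cap\underline{n_i}$. For a permutation $\tau$ of $\underline m$, $(n,s^\tau,L^\tau)$ denotes the unique tree (with non-leaf root $n$) whose sequence of successor trees is $(n_{\tau(1)},s_{\tau(1)},L_{\tau(1)}),\dots,(n_{\tau(m)},s_{\tau(m)},L_{\tau(m)})$. The relation $\sim$ is the smallest equivalence relation on trees such that (i) $(n,s,L)\sim(n,s^\tau,L^\tau)$ for every applicable permutation $\tau$, and (ii) if $(n,s,L)$ and $(n',s',L')$ have successor tree sequences $(n_1,s_1,L_1),\dots,(n_m,s_m,L_m)$ and $(n_1,s'_1,L'_1),\dots,(n_m,s'_m,L'_m)$ with $(n_i,s_i,L_i)\sim(n_i,s'_i,L'_i)$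 for all $i$, then $(n,s,L)\sim(n',s',L')$. *)

(* Defs.v *)
From mathcomp Require Import all_boot all_fingroup.
Set Implicit Arguments. Unset Strict Implicit. Unset Printing Implicit Defensive.

(* The map s : {1..n-1} -> {1..n} is represented by a
   function nat -> nat which is required to be 0 outside {1..n-1}; the set
   L subset of {1..n} is represented by its characteristic function. *)
Record tree := Tree { tn : nat; ts : nat -> nat; tL : nat -> bool }.

Definition is_tree (t : tree) : Prop :=
  let: Tree n s L := t in
  [/\ 1 <= n,
      (forall x, 1 <= x <= n.-1 -> x < s x <= n /\ ~~ L (s x)),
      (forall x, ~~ (1 <= x <= n.-1) -> s x = 0),
      (forall x, L x -> 1 <= x <= n) &
      (forall x y, 1 <= x <= y -> y < s x -> s y <= s x)].

Definition kseq (t : tree) : seq nat :=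
  [seq k <- iota 1 (tn t).-1 | ts t k == tn t].

(* The successor tree between k_{i-1} = k0 and k_i = k1. *)
Definition sub_tree (t : tree) (k0 k1 : nat) : tree :=
  Tree (k1 - k0)
       (fun j => if 1 <= j < k1 - k0 then ts t (j + k0) - k0 else 0)
       (fun x => (1 <= x <= k1 - k0) && tL t (x + k0)).

(* The sequence of successor trees (meaningful when n is not in L). *)
Definition succs (t : tree) : seq tree :=
  let ks := kseq t in [seq sub_tree t p.1 p.2 | p <- zip (0 :: ks) ks].

(* Grafting a sequence of trees under a new (non-leaf) root:
   the unique tree with non-leaf root whose successor trees are the given ones. *)
Fixpoint graft_s (us : seq tree) (N o x : nat) : nat :=
  match us with
  | [::] => 0
  | u :: us' =>
      if x <= o + tn u then (if x == o + tn u then N else o + ts u (x - o))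
      else graft_s us' N (o + tn u) x
  end.

Fixpoint graft_L (us : seq tree) (o x : nat) : bool :=
  match us with
  | [::] => false
  | u :: us' =>
      if x <= o + tn u then (o < x) && tL u (x - o)
      else graft_L us' (o + tn u) x
  end.

Definition graft (us : seq tree) : tree :=
  let N := (sumn [seq tn u | u <- us]).+1 in
  Tree N (fun x => if 1 <= x < N then graft_s us N 0 x else 0)
         (fun x => (1 <= x < N) && graft_L us 0 x).

Definition dummy_tree : tree := Tree 1 (fun _ => 0) (fun _ => false).

Definition perm_tree (t : tree) (tau : {perm 'I_(size (succs t))}) : tree :=
  graft [seq nth dummy_tree (succs t) (tau i) | i <- enum 'I_(size (succs t))].

Inductive sim : tree -> tree -> Prop :=
| sim_refl t : is_tree t -> sim t t
| sim_sym t u : sim t u -> sim u t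
| sim_trans t u v : sim t u -> sim u v -> sim t v
| sim_perm t (tau : {perm 'I_(size (succs t))}) :
    is_tree t -> ~~ tL t (tn t) -> sim t (perm_tree tau)
| sim_cong t u :
    is_tree t -> is_tree u -> ~~ tL t (tn t) -> ~~ tL u (tn u) ->
    size (succs t) = size (succs u) ->
    (forall i, i < size (succs t) ->
       tn (nth dummy_tree (succs t) i) = tn (nth dummy_tree (succs u) i) /\
       sim (nth dummy_tree (succs t) i) (nth dummy_tree (succs u) i)) ->
    sim t u.

(* Main.v *)
Require Import Defs.
From mathcomp Require Import all_boot all_fingroup.
From mathcomp Require Import zify.
From Stdlib Require Import FunctionalExtensionality.
Set Implicit Arguments. Unset Strict Implicit. Unset Printing Implicit Defensive.

Fixpoint off (us : seq tree) (i : nat) : nat :=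
  match us, i with
  | u :: us', i'.+1 => tn u + off us' i'
  | _, _ => 0
  end.

Fixpoint blk (us : seq tree) (x : nat) : nat :=
  match us with
  | [::] => 0
  | u :: us' => if x <= tn u then 0 else (blk us' (x - tn u)).+1
  end.

Definition sz us := sumn [seq tn u | u <- us].
Notation nt us i := (nth dummy_tree us i).

Lemma sz_cons u us : sz (u :: us) = tn u + sz us. Proof. by []. Qed.

Lemma graft_s_off us N o i y : i < size us -> 1 <= y <= tn (nt us i) ->
  graft_s us N o (o + off us i + y) =
  if y == tn (nt us i) then N else o + off us i + ts (nt us i) y.
Proof.
elim: us o i => [|u us IH] o [|i] //= Hi Hy.
- rewrite addn0 leq_add2l (proj2 (andP Hy)) eqn_add2l addKn. by [].
- have -> : (o + (tn u + off us i) + y <= o + tn u) = false by lia.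
  rewrite !addnA IH //.
Qed.

Lemma graft_L_off us o i y : i < size us -> 1 <= y <= tn (nt us i) ->
  graft_L us o (o + off us i + y) = tL (nt us i) y.
Proof.
elim: us o i => [|u us IH] o [|i] //= Hi Hy.
- rewrite addn0 leq_add2l (proj2 (andP Hy)) addKn.
  have -> : o < o + y by lia. by [].
- have -> : (o + (tn u + off us i) + y <= o + tn u) = false by lia.
  rewrite !addnA IH //.
Qed.

Lemma blk_off us i y : i < size us -> 1 <= y <= tn (nt us i) ->
  blk us (off us i + y) = i.
Proof.
elim: us i => [|u us IH] [|i] //= Hi Hy.
- by rewrite (proj2 (andP Hy)).
- have -> : (tn u + off us i + y <= tn u) = false by lia.
  by rewrite -addnA addKn IH.
Qed.

Lemma blk_dec us x : 1 <= x <= sz us ->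
  blk us x < size us /\ off us (blk us x) < x <= off us (blk us x) + tn (nt us (blk us x)).
Proof.
elim: us x => [|u us IH] x /=; first by rewrite /sz /=; lia.
rewrite sz_cons => Hx. case: ifP => Hxu /=; first by lia.
have [H1 H2] := IH (x - tn u) ltac:(lia). lia.
Qed.

Lemma off_bound us i : i < size us -> off us i + tn (nt us i) <= sz us.
Proof.
elim: us i => [|u us IH] [|i] //= Hi; rewrite sz_cons; first lia.
have := IH i Hi; lia.
Qed.

Lemma off0 us : off us 0 = 0. Proof. by case: us. Qed.

Lemma off_S us i : i < size us -> off us i.+1 = off us i + tn (nt us i).
Proof.
elim: us i => [|u us IH] [|i] //= Hi; first by rewrite off0; lia.
rewrite IH //; lia.
Qed.

Section Acc.
Variable t : tree.
Hypothesis Ht : is_tree t.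
Lemma tr_n1 : 1 <= tn t. Proof. by case: t Ht => n s L [] /=. Qed.
Lemma tr_s x : 1 <= x <= (tn t).-1 -> x < ts t x <= tn t.
Proof. by case: t Ht => n s L [] /= _ H *; case: (H x). Qed.
Lemma tr_sL x : 1 <= x <= (tn t).-1 -> ~~ tL t (ts t x).
Proof. by case: t Ht => n s L [] /= _ H *; case: (H x). Qed.
Lemma tr_s0 x : ~~ (1 <= x <= (tn t).-1) -> ts t x = 0.
Proof. by case: t Ht => n s L [] /= _ _ H *; apply: H. Qed.
Lemma tr_L x : tL t x -> 1 <= x <= tn t.
Proof. by case: t Ht => n s L [] /= _ _ _ H *; apply: H. Qed.
Lemma tr_nest x y : 1 <= x <= y -> y < ts t x -> ts t y <= ts t x.
Proof. by case: t Ht => n s L [] /= _ _ _ _ H *; apply: H. Qed.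
Lemma tr_sle x : ts t x <= tn t.
Proof.
case: (boolP (1 <= x <= (tn t).-1)) => H; first by case/andP: (tr_s H).
by rewrite tr_s0.
Qed.
End Acc.

Lemma mk_tree n s L : 1 <= n ->
  (forall x, 1 <= x <= n.-1 -> x < s x <= n /\ ~~ L (s x)) ->
  (forall x, ~~ (1 <= x <= n.-1) -> s x = 0) ->
  (forall x, L x -> 1 <= x <= n) ->
  (forall x y, 1 <= x <= y -> y < s x -> s y <= s x) -> is_tree (Tree n s L).
Proof. by move=> *; split. Qed.
Lemma mk_tree' t : 1 <= tn t ->
  (forall x, 1 <= x <= (tn t).-1 -> x < ts t x <= tn t /\ ~~ tL t (ts t x)) ->
  (forall x, ~~ (1 <= x <= (tn t).-1) -> ts t x = 0) ->
  (forall x, tL t x -> 1 <= x <= tn t) ->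
  (forall x y, 1 <= x <= y -> y < ts t x -> ts t y <= ts t x) -> is_tree t.
Proof. by case: t => n s L; move=> *; split. Qed.

Lemma tn_graft us : tn (graft us) = (sz us).+1. Proof. by []. Qed.
Lemma ts_graft us x : ts (graft us) x =
  if 1 <= x < (sz us).+1 then graft_s us (sz us).+1 0 x else 0.
Proof. by []. Qed.
Lemma tL_graft us x : tL (graft us) x = (1 <= x < (sz us).+1) && graft_L us 0 x.
Proof. by []. Qed.

Lemma ts_graft_off us i y : i < size us -> 1 <= y <= tn (nt us i) ->
  ts (graft us) (off us i + y) =
  if y == tn (nt us i) then (sz us).+1 else off us i + ts (nt us i) y.
Proof.
move=> Hi Hy; rewrite ts_graft.
have Hb := off_bound Hi. have -> : 1 <= off us i + y < (sz us).+1 by lia.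
by have := graft_s_off (sz us).+1 0 Hi Hy; rewrite add0n.
Qed.

Lemma tL_graft_off us i y : i < size us -> 1 <= y <= tn (nt us i) ->
  tL (graft us) (off us i + y) = tL (nt us i) y.
Proof.
move=> Hi Hy; rewrite tL_graft.
have Hb := off_bound Hi. have -> : 1 <= off us i + y < (sz us).+1 by lia.
by have := graft_L_off 0 Hi Hy; rewrite add0n.
Qed.

Definition allv us := forall i, i < size us -> is_tree (nt us i).

Lemma dec us x : 1 <= x <= sz us ->
  exists i y, [/\ i < size us, 1 <= y <= tn (nt us i) & x = off us i + y].
Proof.
move=> Hx; have [H1 H2] := blk_dec Hx.
exists (blk us x), (x - off us (blk us x)); split => //; lia.
Qed.

Lemma graft_valid us : allv us -> is_tree (graft us).
Proof.
move=> Hv.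
have Hsle : forall x, ts (graft us) x <= (sz us).+1.
  move=> x. case: (boolP (1 <= x <= sz us)) => Hx; last first.
    rewrite ts_graft; case: ifP => //; lia.
  have [i [y [Hi Hy Ex]]] := dec Hx.
  rewrite Ex ts_graft_off //.
  have := off_bound Hi. case: eqP => // Hne. have := tr_sle (Hv i Hi) y. lia.
apply: mk_tree' => //; rewrite ?tn_graft.
- move=> x Hx. have [i [y [Hi Hy ->]]] := dec (x:=x) (us:=us) ltac:(lia).
  rewrite ts_graft_off //. have Hb := off_bound Hi. case: eqP => Hya.
  + split; first lia. by rewrite tL_graft ltnn andbF.
  + have Hy' : 1 <= y <= (tn (nt us i)).-1 by lia.
    have Hs := tr_s (Hv i Hi) Hy'. have HL := tr_sL (Hv i Hi) Hy'.
    split; first lia. rewrite tL_graft_off //; lia.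
- move=> x Hx; rewrite ts_graft; case: ifP => //; lia.
- move=> x; rewrite tL_graft => /andP[]; lia.
- move=> x y Hxy Hy.
  case: (boolP (1 <= x <= sz us)) => Hx; last first.
    move: Hy; rewrite ts_graft; case: ifP => //; lia.
  have [i [z [Hi Hz Ex]]] := dec Hx.
  move: Hy; rewrite Ex ts_graft_off //. case: eqP => Hza; first by rewrite Hsle.
  move=> Hy. have Hz' : 1 <= z <= (tn (nt us i)).-1 by lia.
  have Hs := tr_s (Hv i Hi) Hz'.
  have Ey : y = off us i + (y - off us i) by lia.
  rewrite Ey ts_graft_off; try lia.
  have -> : (y - off us i == tn (nt us i)) = false by lia.
  rewrite leq_add2l. apply: tr_nest; [exact: Hv | lia | lia].
Qed.

Fixpoint psums o (us : seq tree) : seq nat :=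
  match us with [::] => [::] | u :: us' => (o + tn u) :: psums (o + tn u) us' end.

Lemma filter_nil_in (p : pred nat) s : (forall x, x \in s -> ~~ p x) -> filter p s = [::].
Proof.
elim: s => //= x s IH H; rewrite (negbTE (H x (mem_head _ _))) IH // => y Hy.
by apply: H; rewrite in_cons Hy orbT.
Qed.

Lemma allv_cons u us : allv (u :: us) -> is_tree u /\ allv us.
Proof.
move=> H; split; first exact: (H 0).
by move=> i Hi; apply: (H i.+1).
Qed.

Lemma filter_graft us o N : allv us -> o + sz us < N ->
  filter (fun k => graft_s us N o k == N) (iota o.+1 (sz us)) = psums o us.
Proof.
elim: us o => [|u us IH] o //= /allv_cons [Hu Hv]; rewrite sz_cons => HN.
have Ha := tr_n1 Hu.
rewrite iotaD filter_cat.
have -> : tn u = (tn u).-1 + 1 by lia.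
rewrite iotaD filter_cat /= filter_nil_in; last first.
  move=> k; rewrite mem_iota => Hk.
  have -> : k <= o + ((tn u).-1 + 1) by lia.
  have -> : (k == o + ((tn u).-1 + 1)) = false by lia.
  have := tr_sle Hu (k - o); lia.
have -> : o.+1 + (tn u).-1 <= o + ((tn u).-1 + 1) by lia.
have -> : o.+1 + (tn u).-1 == o + ((tn u).-1 + 1) by lia.
rewrite eqxx /=. have -> : (tn u).-1 + 1 = tn u by lia.
have -> : o.+1 + (tn u).-1 = o + tn u by lia.
congr (_ :: _).
have -> : o.+1 + tn u = (o + tn u).+1 by lia.
rewrite -IH //; last lia.
apply: eq_in_filter => k; rewrite mem_iota => Hk.
by have -> : k <= o + tn u = false by lia.
Qed.

Lemma kseq_graft us : allv us -> kseq (graft us) = psums 0 us.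
Proof.
move=> Hv; rewrite /kseq tn_graft.
have -> : (sz us).+1.-1 = sz us by [].
rewrite -(filter_graft (o := 0) (N:=(sz us).+1)) //.
apply: eq_in_filter => k; rewrite mem_iota => Hk.
by rewrite ts_graft; have -> : 1 <= k < (sz us).+1 by lia.
Qed.

Lemma succs_sub us o N T : allv us ->
  (forall x, o < x <= o + sz us -> ts T x = graft_s us N o x /\ tL T x = graft_L us o x) ->
  [seq sub_tree T p.1 p.2 | p <- zip (o :: psums o us) (psums o us)] = us.
Proof.
elim: us o => [|u us IH] o //= /allv_cons [Hu Hv]; rewrite sz_cons => HT.
congr (_ :: _); last first.
  apply: IH => // x Hx. have [-> ->] := HT x ltac:(lia).
  by have -> : x <= o + tn u = false by lia.
rewrite /sub_tree. case: u Hu HT => a s L Hu HT /=.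
have Hv1 := tr_s0 Hu. have Hv2 := tr_L Hu.
rewrite addKn. congr Tree; apply: functional_extensionality => j.
- case: ifP => Hj.
  + have [-> _] := HT (j + o) ltac:(rewrite /=; lia) => /=.
    have -> : j + o <= o + a by lia.
    have -> : (j + o == o + a) = false by lia.
    by rewrite addnK addKn.
  + rewrite -[s j]/(ts (Tree a s L) j) Hv1 //=; lia.
- case: (boolP (1 <= j <= a)) => Hj /=.
  + have [_ ->] := HT (j + o) ltac:(rewrite /=; lia) => /=.
    have -> : j + o <= o + a by lia.
    by rewrite addnK; have -> : o < j + o by lia.
  + by case: (boolP (L j)) => // /(Hv2 j) /= H; move: Hj; rewrite H.
Qed.

Lemma succs_graft us : allv us -> succs (graft us) = us.
Proof.
move=> Hv; rewrite /succs kseq_graft //.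
apply: (succs_sub (N := (sz us).+1)) => // x Hx.
by rewrite ts_graft tL_graft; have -> : 1 <= x < (sz us).+1 by lia.
Qed.

Fixpoint good (P : pred nat) B o (ks : seq nat) : Prop :=
  match ks with
  | [::] => True
  | k :: ks' => [/\ o < k < B, (forall x, o < x < k -> ~~ P x), P k & good P B k ks']
  end.

Lemma good_filter P B a b o : o < a -> a + b <= B -> (forall x, o < x < a -> ~~ P x) ->
  good P B o (filter P (iota a b)).
Proof.
elim: b a o => [|b IH] a o //= Hoa Hab Hg.
case: ifP => Pa /=.
- split => //; first lia. apply: IH; [lia | lia | ]. move=> x; lia.
- apply: IH; [lia | lia | ]. move=> x Hx. case: (ltnP x a) => Hxa; first by apply: Hg; lia.
  have -> : x = a by lia. by rewrite Pa.
Qed.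

Lemma good_last P B o ks : good P B o ks -> o <= last o ks.
Proof.
elim: ks o => [|k ks IH] o //= [H1 _ _ H4]. have := IH _ H4; lia.
Qed.

Section Decomp.
Variable t : tree.
Hypothesis Ht : is_tree t.
Notation n := (tn t).
Notation s := (ts t).
Notation L := (tL t).
Definition P := fun k => s k == n.

Lemma kseq_good : good P n 0 (kseq t).
Proof.
have := tr_n1 Ht => Hn.
exact: (@good_filter P n 1 n.-1 0 ltac:(lia) ltac:(lia) ltac:(move=> x; lia)).
Qed.

Lemma last_kseq : last 0 (kseq t) = n.-1.
Proof.
have Hn := tr_n1 Ht. rewrite /kseq.
case: (ltnP 1 n) => Hn2; last by have -> : n.-1 = 0 by lia.
have Hs := tr_s Ht (x := n.-1) ltac:(lia).
have -> : n.-1 = n.-2 + 1 by lia.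
rewrite iotaD filter_cat /=.
have -> : 1 + n.-2 = n.-1 by lia.
have -> : s n.-1 == n by lia.
by rewrite last_cat /=; lia.
Qed.

Lemma sub_valid o k : o < k < n -> (forall x, o < x < k -> ~~ P x) -> P k ->
  is_tree (sub_tree t o k).
Proof.
move=> Hok Hg /eqP Pk.
have Hin : forall x, o < x < k -> x < s x <= k.
  move=> x Hx. have Hs := tr_s Ht (x := x) ltac:(lia).
  have := Hg x Hx; rewrite /P => Hne.
  case: (leqP (s x) k) => Hsk; first lia.
  have := tr_nest Ht (x := x) (y := k) ltac:(lia) Hsk. lia.
apply: mk_tree' => /=.
- lia.
- move=> x Hx. have -> : 1 <= x < k - o by lia.
  have := Hin (x + o) ltac:(lia) => Hs. split; first lia.
  rewrite negb_and; apply/orP; right.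
  have -> : s (x + o) - o + o = s (x + o) by lia.
  apply: tr_sL => //; lia.
- move=> x Hx; case: ifP => //; lia.
- by move=> x /andP[].
- move=> x y Hxy. case: ifP => Hx; last by lia.
  move=> Hy. have -> : 1 <= y < k - o.
    have := Hin (x + o) ltac:(lia); lia.
  have := tr_nest Ht (x := x + o) (y := y + o) ltac:(lia) ltac:(lia). lia.
Qed.

Lemma good_sub_valid o ks : good P n o ks ->
  allv [seq sub_tree t p.1 p.2 | p <- zip (o :: ks) ks].
Proof.
elim: ks o => [|k ks IH] o //= [H1 H2 H3 H4] [|i] Hi /=.
- exact: sub_valid.
- exact: IH.
Qed.

Lemma allv_succs : allv (succs t).
Proof. exact: (good_sub_valid kseq_good). Qed.

Lemma good_sz o ks : good P n o ks ->
  sz [seq sub_tree t p.1 p.2 | p <- zip (o :: ks) ks] = last o ks - o.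
Proof.
elim: ks o => [|k ks IH] o /=; first by rewrite subnn.
move=> [H1 H2 H3 H4]. rewrite sz_cons IH // /=. have := good_last H4. lia.
Qed.

Lemma good_graft_s o ks N : good P n o ks -> forall x, o < x <= last o ks ->
  graft_s [seq sub_tree t p.1 p.2 | p <- zip (o :: ks) ks] N o x = if s x == n then N else s x.
Proof.
elim: ks o => [|k ks IH] o /=; first lia.
move=> [H1 H2 H3 H4] x Hx.
have -> : o + (k - o) = k by lia.
case: ifP => Hxk.
- case: eqP => Hxk'.
  + by subst x; rewrite /P in H3; rewrite H3.
  + have Hg := H2 x ltac:(lia). rewrite /P in Hg. rewrite (negbTE Hg).
    have Hs := tr_s Ht (x := x) ltac:(lia).
    have -> : 1 <= x - o < k - o by lia.
    have -> : x - o + o = x by lia. lia.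
- apply: IH => //; lia.
Qed.

Lemma good_graft_L o ks : good P n o ks -> forall x, o < x <= last o ks ->
  graft_L [seq sub_tree t p.1 p.2 | p <- zip (o :: ks) ks] o x = L x.
Proof.
elim: ks o => [|k ks IH] o /=; first lia.
move=> [H1 H2 H3 H4] x Hx.
have -> : o + (k - o) = k by lia.
case: ifP => Hxk.
- have -> : o < x by lia. have -> : 1 <= x - o <= k - o by lia.
  by have -> : x - o + o = x by lia.
- apply: IH => //; lia.
Qed.

Lemma sz_succs : sz (succs t) = n.-1.
Proof. by rewrite /succs (good_sz kseq_good) last_kseq subn0. Qed.

Lemma tree_eq a b : tn a = tn b -> ts a =1 ts b -> tL a =1 tL b -> a = b.
Proof.
case: a => n1 s1 L1; case: b => n2 s2 L2 /= -> Hs HL.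
by congr Tree; apply: functional_extensionality.
Qed.

Lemma graft_succs : ~~ L n -> graft (succs t) = t.
Proof.
move=> HLn. have Hn := tr_n1 Ht.
have E1 : (sz (succs t)).+1 = n by rewrite sz_succs; lia.
apply: tree_eq; first by rewrite tn_graft E1.
- move=> x; rewrite ts_graft E1. case: ifP => Hx.
  + rewrite /succs (good_graft_s _ (kseq_good)); last by rewrite last_kseq; lia.
    by case: eqP.
  + rewrite tr_s0 //; lia.
- move=> x; rewrite tL_graft E1. case: (boolP (0 < x < n)) => Hx /=.
  + by rewrite /succs (good_graft_L (kseq_good)) // last_kseq; lia.
  + case: (boolP (L x)) => // HL. have := tr_L Ht HL => H.
    have Exn : x = n by lia. by move: HLn; rewrite -Exn HL.
Qed.

End Decomp.

Definition isoP n (s s' : nat -> nat) (L L' : nat -> bool) (sg : nat -> nat) : Prop :=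
  [/\ (forall x, 1 <= x <= n -> 1 <= sg x <= n),
      (forall x y, 1 <= x <= n -> 1 <= y <= n -> sg x = sg y -> x = y),
      (forall y, 1 <= y <= n -> exists2 x, 1 <= x <= n & sg x = y),
      (forall y, L' y <-> exists2 x, L x & sg x = y) &
      (forall i, 1 <= i <= n.-1 -> s' (sg i) = sg (s i))].

Definition isoT t u sg := tn t = tn u /\ isoP (tn t) (ts t) (ts u) (tL t) (tL u) sg.
Definition iso t u := exists sg, isoT t u sg.

Lemma iso_root t u sg : is_tree t -> is_tree u -> isoT t u sg -> sg (tn t) = tn t.
Proof.
move=> Ht Hu [En [H1 H2 H3 H4 H5]].
have Hn := tr_n1 Ht.
have [x Hx Ex] := H3 (tn t) ltac:(lia).
case: (ltnP x (tn t)) => Hxn; last first.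
  have Exn : x = tn t by lia.
  by move: Ex; rewrite Exn.
have Hx' : 1 <= x <= (tn t).-1 by lia.
have := H5 x Hx'. rewrite Ex (tr_s0 Hu); last by rewrite -En; lia.
have := tr_s Ht Hx' => Hs. have := H1 (ts t x) ltac:(lia). lia.
Qed.

Lemma iso_refl t : iso t t.
Proof.
exists id; split => //; split => //.
- by move=> y Hy; exists y.
- by move=> y; split => [H|[x H <-]]; [exists y|].
Qed.

Lemma inv_ex n (sg : nat -> nat) :
  (forall y, 1 <= y <= n -> exists2 x, 1 <= x <= n & sg x = y) ->
  exists inv : nat -> nat, forall y, 1 <= y <= n -> 1 <= inv y <= n /\ sg (inv y) = y.
Proof.
move=> Hs.
exists (fun y => nth 0 (iota 1 n) (find (fun x => sg x == y) (iota 1 n))) => y Hy.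
have Hh : has (fun x => sg x == y) (iota 1 n).
  have [x Hx Ex] := Hs y Hy. apply/hasP; exists x; last by rewrite Ex.
  by rewrite mem_iota; lia.
have := nth_find 0 Hh. rewrite has_find size_iota in Hh.
rewrite nth_iota // => /eqP ->; split => //; lia.
Qed.

Lemma iso_sym t u : is_tree t -> is_tree u -> iso t u -> iso u t.
Proof.
move=> Ht Hu [sg Hsg]. have Hr := iso_root Ht Hu Hsg.
case: Hsg => En [H1 H2 H3 H4 H5].
have [inv Hinv] := inv_ex H3.
have Hinv2 : forall x, 1 <= x <= tn t -> inv (sg x) = x.
  move=> x Hx. have [h1 h2] := Hinv (sg x) (H1 x Hx). by apply: H2 => //.
exists inv; split => //; rewrite -En; split.
- by move=> x /Hinv [].
- move=> x y Hx Hy E. by rewrite -(proj2 (Hinv x Hx)) -(proj2 (Hinv y Hy)) E.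
- move=> y Hy. exists (sg y); [exact: H1 | exact: Hinv2].
- move=> y; split.
  + move=> HL. have Hy := tr_L Ht HL. exists (sg y); last exact: Hinv2.
    by apply/H4; exists y.
  + move=> [x /H4 [z Hz <-] <-]. by rewrite Hinv2 // (tr_L Ht).
- move=> i Hi. have [h1 h2] := Hinv i ltac:(lia).
  have Hin : inv i != tn t.
    apply/eqP => E. move: h2; rewrite E Hr. lia.
  have Hi' : 1 <= inv i <= (tn t).-1 by lia.
  have := H5 _ Hi'. rewrite h2 => ->. rewrite Hinv2 //.
  have := tr_s Ht Hi'; lia.
Qed.

Lemma iso_trans t u v : is_tree t -> is_tree u -> is_tree v -> iso t u -> iso u v -> iso t v.
Proof.
move=> Ht Hu Hv [f Hf] [g Hg].
have Rf := iso_root Ht Hu Hf.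
case: Hf => E1 [F1 F2 F3 F4 F5]; case: Hg => E2 [G1 G2 G3 G4 G5].
exists (g \o f); split; first by rewrite E1.
rewrite -E1 in G1 G2 G3 G5. split.
- by move=> x Hx /=; apply: G1; apply: F1.
- move=> x y Hx Hy /= E. by apply: F2 => //; apply: G2 => //; apply: F1.
- move=> y Hy. have [z Hz <-] := G3 y Hy. have [x Hx <-] := F3 z Hz. by exists x.
- move=> y; split.
  + move=> /G4 [z /F4 [x Hx <-] <-]. by exists x.
  + move=> [x Hx <-]. apply/G4. exists (f x) => //. by apply/F4; exists x.
- move=> i Hi /=. have Hf := F1 i ltac:(lia).
  have Hne : f i != tn t.
    apply/eqP => E. have := F2 i (tn t) ltac:(lia) ltac:(have := tr_n1 Ht; lia).
    rewrite E Rf => /(_ erefl); lia.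
  rewrite G5; last by lia.
  by rewrite F5.
Qed.

Lemma inj_surj m (f : nat -> nat) : (forall i, i < m -> f i < m) ->
  (forall i j, i < m -> j < m -> f i = f j -> i = j) ->
  perm_eq (map f (iota 0 m)) (iota 0 m) /\ forall j, j < m -> exists2 i, i < m & f i = j.
Proof.
move=> Hr Hi.
have U : uniq (map f (iota 0 m)).
  rewrite map_inj_in_uniq ?iota_uniq // => x y; rewrite !mem_iota => Hx Hy; apply: Hi; lia.
have S : {subset map f (iota 0 m) <= iota 0 m}.
  move=> y /mapP [x]; rewrite !mem_iota => Hx ->; have := Hr x; lia.
have [_ E] := uniq_min_size U S ltac:(by rewrite size_map).
split; first by apply: uniq_perm => //; exact: iota_uniq.
move=> j Hj. have : j \in map f (iota 0 m) by rewrite E mem_iota; lia.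
move=> /mapP [x]; rewrite mem_iota => Hx ->; exists x => //; lia.
Qed.

Lemma sz_nth us : sz us = sumn [seq tn (nt us i) | i <- iota 0 (size us)].
Proof. by rewrite /sz -{1}(mkseq_nth dummy_tree us) /mkseq -map_comp. Qed.

Lemma decN us x : 1 <= x <= (sz us).+1 -> x = (sz us).+1 \/
  exists i y, [/\ i < size us, 1 <= y <= tn (nt us i) & x = off us i + y].
Proof.
move=> Hx. case: (ltnP x (sz us).+1) => H; last by left; lia.
by right; apply: dec; lia.
Qed.

Lemma graft_iso us vs (pi : nat -> nat) (sgs : nat -> nat -> nat) :
  allv us -> allv vs -> size us = size vs ->
  (forall i, i < size us -> pi i < size us) ->
  (forall i j, i < size us -> j < size us -> pi i = pi j -> i = j) ->
  (forall i, i < size us -> isoT (nt us i) (nt vs (pi i)) (sgs i)) ->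
  iso (graft us) (graft vs).
Proof.
move=> Hu Hv Esz Hpi Hinj Hiso.
have [Hperm Hsurj] := inj_surj Hpi Hinj.
have Esum : sz vs = sz us.
  rewrite !sz_nth -Esz -(perm_sumn (perm_map (fun i => tn (nt vs i)) Hperm)) -map_comp.
  congr sumn; apply/eq_in_map => i; rewrite mem_iota => Hi /=.
  by case: (Hiso i ltac:(lia)) => ->.
pose sg x := if 1 <= x <= sz us then
   off vs (pi (blk us x)) + sgs (blk us x) (x - off us (blk us x)) else x.
have Hsg : forall i y, i < size us -> 1 <= y <= tn (nt us i) ->
    sg (off us i + y) = off vs (pi i) + sgs i y.
  move=> i y Hi Hy. rewrite /sg blk_off //. have := off_bound Hi.
  by case: ifP => [_ _|]; [rewrite addKn | lia].
have HsgN : sg (sz us).+1 = (sz us).+1 by rewrite /sg; case: ifP => //; lia.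
have Hrng : forall i y, i < size us -> 1 <= y <= tn (nt us i) ->
    [/\ pi i < size vs, 1 <= sgs i y <= tn (nt vs (pi i)) &
        off vs (pi i) + tn (nt vs (pi i)) <= sz vs].
  move=> i y Hi Hy. have [E [H1 _ _ _ _]] := Hiso i Hi.
  have Hpi' : pi i < size vs by rewrite -Esz; apply: Hpi.
  split => //; first by rewrite -E; apply: H1.
  exact: off_bound.
exists sg; split; first by rewrite !tn_graft Esum.
rewrite tn_graft. split.
- move=> x Hx. case: (decN Hx) => [->|[i [y [Hi Hy ->]]]]; first by rewrite HsgN; lia.
  rewrite Hsg //. have [h1 h2 h3] := Hrng i y Hi Hy. lia.
- move=> x x' Hx Hx'.
  case: (decN Hx) => [->|[i [y [Hi Hy ->]]]];
  case: (decN Hx') => [->|[i' [y' [Hi' Hy' ->]]]] //.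
  + rewrite HsgN Hsg //. have [h1 h2 h3] := Hrng i' y' Hi' Hy'. lia.
  + rewrite HsgN Hsg //. have [h1 h2 h3] := Hrng i y Hi Hy. lia.
  + rewrite !Hsg // => E.
    have [h1 h2 h3] := Hrng i y Hi Hy. have [h1' h2' h3'] := Hrng i' y' Hi' Hy'.
    have Ep : pi i = pi i' by rewrite -(blk_off h1 h2) E blk_off.
    have Ei := Hinj _ _ Hi Hi' Ep. subst i'.
    have Ez : sgs i y = sgs i y' by lia.
    have [En [_ H2 _ _ _]] := Hiso i Hi.
    by rewrite (H2 y y').
- move=> y Hy. rewrite -Esum in Hy.
  case: (decN Hy) => [->|[j [z [Hj Hz ->]]]]; first by exists (sz us).+1; [lia | rewrite Esum].
  have [i Hi Eij] := Hsurj j ltac:(lia). subst j.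
  have [En [_ _ H3 _ _]] := Hiso i Hi.
  have [w Hw Ew] := H3 z ltac:(lia).
  exists (off us i + w); first by have := off_bound Hi; lia.
  by rewrite Hsg // Ew.
- move=> y; split.
  + move=> HL. have := HL; rewrite tL_graft => /andP [Hy _].
    have [j [z [Hj Hz Ey]]] := dec (x := y) (us := vs) ltac:(lia).
    move: HL; rewrite Ey tL_graft_off // => HL.
    have [i Hi Eij] := Hsurj j ltac:(lia). subst j.
    have [En [_ _ _ H4 _]] := Hiso i Hi.
    have [w Hw Ew] := (proj1 (H4 z)) HL.
    have Hwr := tr_L (Hu i Hi) Hw.
    exists (off us i + w); first by rewrite tL_graft_off.
    by rewrite Hsg // Ew.
  + move=> [x HL <-]. have := HL; rewrite tL_graft => /andP [Hx _].
    have [i [z [Hi Hz Ex]]] := dec (x := x) (us := us) ltac:(lia).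
    move: HL; rewrite Ex tL_graft_off // => HL.
    have [h1 h2 h3] := Hrng i z Hi Hz.
    rewrite Hsg // tL_graft_off //.
    have [En [_ _ _ H4 _]] := Hiso i Hi.
    by apply/H4; exists z.
- move=> x Hx.
  have [i [y [Hi Hy ->]]] := dec (x := x) (us := us) ltac:(lia).
  have [h1 h2 h3] := Hrng i y Hi Hy.
  have Hr := iso_root (Hu i Hi) (Hv (pi i) h1) (Hiso i Hi).
  have [En [_ H2 _ _ H5]] := Hiso i Hi.
  rewrite Hsg // ts_graft_off // ts_graft_off //.
  case: (eqVneq y (tn (nt us i))) => Hya.
  + rewrite Hya Hr -En !eqxx Esum. by [].
  + have Hy' : 1 <= y <= (tn (nt us i)).-1 by lia.
    have Hne : (sgs i y == tn (nt vs (pi i))) = false.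
      apply/eqP => E. have E' : sgs i y = sgs i (tn (nt us i)) by rewrite Hr En.
      have := H2 y (tn (nt us i)) ltac:(lia) ltac:(have := tr_n1 (Hu i Hi); lia) E'. lia.
    rewrite Hne H5 //.
    have Hs := tr_s (Hu i Hi) Hy'. rewrite Hsg //; lia.
Qed.

Definition sim_ind' (Q : tree -> tree -> Prop)
 (Hrefl : forall t, is_tree t -> Q t t)
 (Hsym : forall t u, sim t u -> Q t u -> Q u t)
 (Htrans : forall t u v, sim t u -> Q t u -> sim u v -> Q u v -> Q t v)
 (Hperm : forall t (tau : {perm 'I_(size (succs t))}), is_tree t -> ~~ tL t (tn t) -> Q t (perm_tree tau))
 (Hcong : forall t u, is_tree t -> is_tree u -> ~~ tL t (tn t) -> ~~ tL u (tn u) ->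
    size (succs t) = size (succs u) ->
    (forall i, i < size (succs t) ->
       tn (nth dummy_tree (succs t) i) = tn (nth dummy_tree (succs u) i) /\
       Q (nth dummy_tree (succs t) i) (nth dummy_tree (succs u) i)) -> Q t u) :
 forall t u, sim t u -> Q t u :=
 fix F t u (H : sim t u) {struct H} : Q t u :=
 match H in sim t u return Q t u with
 | sim_refl t Ht => Hrefl t Ht
 | sim_sym t u H => Hsym t u H (F t u H)
 | sim_trans t u v H1 H2 => Htrans t u v H1 (F t u H1) H2 (F u v H2)
 | sim_perm t tau Ht Hl => Hperm t tau Ht Hl
 | sim_cong t u Ht Hu Hlt Hlu Hs Hall =>
     Hcong t u Ht Hu Hlt Hlu Hs
       (fun i hi => match Hall i hi with conj a b => conj a (F _ _ b) end)
 end.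

From Stdlib Require Import IndefiniteDescription.

Lemma isoT_id t : isoT t t id.
Proof.
split => //; split => //.
- by move=> y Hy; exists y.
- by move=> y; split => [H|[x H <-]]; [exists y|].
Qed.

Lemma nt_perm (us : seq tree) (tau : {perm 'I_(size us)}) i (Hi : i < size us) :
  nt [seq nt us (tau j) | j <- enum 'I_(size us)] i = nt us (tau (Ordinal Hi)).
Proof.
rewrite (nth_map (Ordinal Hi)) ?size_enum_ord //.
by have -> : nth (Ordinal Hi) (enum 'I_(size us)) i = Ordinal Hi
  by apply: val_inj; rewrite /= nth_enum_ord.
Qed.

Lemma perm_valid t (tau : {perm 'I_(size (succs t))}) : is_tree t ->
  allv [seq nt (succs t) (tau j) | j <- enum 'I_(size (succs t))].
Proof.
move=> Ht i; rewrite size_map size_enum_ord => Hi.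
rewrite nt_perm. exact: allv_succs.
Qed.

Lemma perm_iso t (tau : {perm 'I_(size (succs t))}) : is_tree t -> ~~ tL t (tn t) ->
  is_tree (perm_tree tau) /\ iso t (perm_tree tau).
Proof.
move=> Ht HL. have Hw := @perm_valid t tau Ht.
have Hp : is_tree (perm_tree tau) by apply: graft_valid.
split => //.
apply: iso_sym => //.
have E := graft_succs Ht HL. rewrite /perm_tree.
set us := succs t in tau Hw Hp E *.
suff: iso (graft [seq nt us (tau i) | i <- enum 'I_(size us)]) (graft us) by rewrite E.
pose pi i := if (insub i : option 'I_(size us)) is Some j then val (tau j) else 0.
have Epi : forall i (Hi : i < size us), pi i = val (tau (Ordinal Hi)).
  move=> i Hi. rewrite /pi insubT /=. by congr (val (tau _)); apply: val_inj.
apply: (graft_iso (pi := pi) (sgs := fun _ => id)) => //.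
- exact: allv_succs.
- by rewrite size_map size_enum_ord.
- move=> i; rewrite size_map size_enum_ord => Hi. rewrite (Epi i Hi); exact: ltn_ord.
- move=> i j; rewrite size_map size_enum_ord => Hi Hj. rewrite (Epi i Hi) (Epi j Hj).
  by move=> /val_inj /perm_inj /(congr1 val).
- move=> i; rewrite size_map size_enum_ord => Hi. rewrite nt_perm (Epi i Hi). exact: isoT_id.
Qed.

Lemma sim_fwd t u : sim t u -> is_tree t /\ is_tree u /\ iso t u.
Proof.
elim/sim_ind': t u / .
- move=> t Ht; do 2!split => //; exact: iso_refl.
- by move=> t u _ [H1 [H2 H3]]; do 2!split => //; apply: iso_sym.
- move=> t u v _ [H1 [H2 H3]] _ [H4 [H5 H6]]; do 2!split => //; exact: iso_trans H3 H6.
- move=> t tau Ht HL. have [H1 H2] := @perm_iso t tau Ht HL. by [].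
- move=> t u Ht Hu HLt HLu Hs Hall; do 2!split => //.
  rewrite -(graft_succs Ht HLt) -(graft_succs Hu HLu).
  have : forall i, exists sg, i < size (succs t) ->
      isoT (nt (succs t) i) (nt (succs u) i) sg.
    move=> i. case: (ltnP i (size (succs t))) => Hi; last by exists id.
    have [_ [_ [_ [sg Hsg]]]] := Hall i Hi. by exists sg.
  move=> /functional_choice [sgs Hsgs].
  apply: (graft_iso (pi := id) (sgs := sgs)) => //; exact: allv_succs.
Qed.

Lemma inj_le lo a lo' b (f : nat -> nat) :
  (forall x, lo <= x < lo + a -> lo' <= f x < lo' + b) ->
  (forall x y, lo <= x < lo + a -> lo <= y < lo + a -> f x = f y -> x = y) -> a <= b.
Proof.
move=> Hr Hi.
have U : uniq (map f (iota lo a)).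
  rewrite map_inj_in_uniq ?iota_uniq // => x y; rewrite !mem_iota => Hx Hy; apply: Hi; lia.
have S : {subset map f (iota lo a) <= iota lo' b}.
  move=> y /mapP [x]; rewrite !mem_iota => Hx ->; exact: Hr.
by have := uniq_leq_size U S; rewrite size_map !size_iota.
Qed.

Lemma surj_le lo a lo' b (f : nat -> nat) :
  (forall y, lo' <= y < lo' + b -> exists2 x, lo <= x < lo + a & f x = y) -> b <= a.
Proof.
move=> Hs.
have S : {subset iota lo' b <= map f (iota lo a)}.
  move=> y; rewrite mem_iota => /Hs [x Hx <-]. by apply: map_f; rewrite mem_iota.
by have := uniq_leq_size (iota_uniq lo' b) S; rewrite size_map !size_iota.
Qed.

Fixpoint topf (s : nat -> nat) (N k x : nat) : nat :=
  if k is k'.+1 then (if s x == N then x else topf s N k' (s x)) else x.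

Lemma topf0 s N x : topf s N 0 x = x. Proof. by []. Qed.
Lemma topfS s N k x : topf s N k.+1 x = if s x == N then x else topf s N k (s x).
Proof. by []. Qed.

Lemma topf_blk us i y k : allv us -> i < size us -> 1 <= y <= tn (nt us i) ->
  tn (nt us i) - y <= k ->
  topf (ts (graft us)) (sz us).+1 k (off us i + y) = off us i + tn (nt us i).
Proof.
move=> Hv Hi; elim: k y => [|k IH] y Hy Hk.
- by rewrite topf0; have -> : y = tn (nt us i) by lia.
- rewrite topfS ts_graft_off //. case: (boolP (y == tn (nt us i))) => Hya.
  + by rewrite eqxx; move/eqP: Hya => ->.
  + have Hy' : 1 <= y <= (tn (nt us i)).-1 by lia.
    have Hs := tr_s (Hv i Hi) Hy'. have Hb := off_bound Hi.
    have -> : (off us i + ts (nt us i) y == (sz us).+1) = false by lia.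
    apply: IH; lia.
Qed.

Section Dec.
Variables (us vs : seq tree) (sg : nat -> nat).
Hypotheses (Hu : allv us) (Hv : allv vs) (Hsg : isoT (graft us) (graft vs) sg).

Lemma ES : sz vs = sz us.
Proof. by case: Hsg => /= [[]]. Qed.

Lemma sgN : sg (sz us).+1 = (sz us).+1.
Proof. exact: (iso_root (graft_valid Hu) (graft_valid Hv) Hsg). Qed.

Lemma sgP : isoP (sz us).+1 (ts (graft us)) (ts (graft vs)) (tL (graft us)) (tL (graft vs)) sg.
Proof. by case: Hsg. Qed.

Lemma sg_rng x : 1 <= x <= sz us -> 1 <= sg x <= sz us.
Proof.
move=> Hx. have [H1 H2 _ _ _] := sgP.
have := H1 x ltac:(lia). case: (eqVneq (sg x) (sz us).+1) => E; last by lia.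
have := H2 x (sz us).+1 ltac:(lia) ltac:(lia). rewrite E sgN => /(_ erefl). lia.
Qed.

Lemma sg_s x : 1 <= x <= sz us -> ts (graft vs) (sg x) = sg (ts (graft us) x).
Proof. move=> Hx. have [_ _ _ _ H5] := sgP. by apply: H5. Qed.

Lemma topf_sg k x : 1 <= x <= sz us ->
  topf (ts (graft vs)) (sz us).+1 k (sg x) = sg (topf (ts (graft us)) (sz us).+1 k x).
Proof.
elim: k x => [|k IH] x Hx; first by rewrite !topf0.
rewrite !topfS sg_s //.
have Hs := tr_s (graft_valid Hu) (x := x) ltac:(rewrite tn_graft; lia).
rewrite tn_graft in Hs.
have E1 : (sg (ts (graft us) x) == (sz us).+1) = (ts (graft us) x == (sz us).+1).
  apply/eqP/eqP => [E|->]; last exact: sgN.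
  case: (eqVneq (ts (graft us) x) (sz us).+1) => // Hne.
  have := sg_rng (x := ts (graft us) x) ltac:(lia). lia.
rewrite E1. case: ifP => // E2. apply: IH. move/negbT: E2. lia.
Qed.

Definition jf i := blk vs (sg (off us i + tn (nt us i))).

Lemma sg_top i : i < size us ->
  jf i < size vs /\ sg (off us i + tn (nt us i)) = off vs (jf i) + tn (nt vs (jf i)).
Proof.
move=> Hi. have Hb := off_bound Hi. have Ha := tr_n1 (Hu Hi).
have Hr := sg_rng (x := off us i + tn (nt us i)) ltac:(lia).
have [j [z [Hj Hz Ez]]] := dec (x := sg (off us i + tn (nt us i))) (us := vs) ltac:(rewrite ES; lia).
have Hb' := off_bound Hj.
have := topf_sg (sz us).+1 (x := off us i + tn (nt us i)) ltac:(lia).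
rewrite (topf_blk (k := (sz us).+1) Hu Hi) ?subnn //; last lia.
rewrite {1}Ez -ES (topf_blk Hv Hj Hz); last lia.
move=> E. rewrite /jf -E blk_off //; last by have := tr_n1 (Hv Hj); lia.
Qed.

Lemma blockmap i y : i < size us -> 1 <= y <= tn (nt us i) ->
  [/\ jf i < size vs, 1 <= sg (off us i + y) - off vs (jf i) <= tn (nt vs (jf i)) &
      sg (off us i + y) = off vs (jf i) + (sg (off us i + y) - off vs (jf i))].
Proof.
move=> Hi Hy. have Hb := off_bound Hi. have [Hji Ht] := sg_top Hi.
have Hr := sg_rng (x := off us i + y) ltac:(lia).
have [j [z [Hj Hz Ez]]] := dec (x := sg (off us i + y)) (us := vs) ltac:(rewrite ES; lia).
have := topf_sg (sz us).+1 (x := off us i + y) ltac:(lia).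
rewrite (topf_blk (k := (sz us).+1) Hu Hi) //; last lia.
have Hb' := off_bound Hj.
rewrite {1}Ez -ES (topf_blk Hv Hj Hz); last lia.
rewrite Ht Ez => E.
have Ej : j = jf i.
  have := tr_n1 (Hv Hji). have := tr_n1 (Hv Hj). move=> a1 a2.
  have := congr1 (blk vs) E. rewrite !blk_off //; lia.
subst j. split => //; lia.
Qed.

Lemma jf_inj i i' : i < size us -> i' < size us -> jf i = jf i' -> i = i'.
Proof.
move=> Hi Hi' E. have [_ T1] := sg_top Hi. have [_ T2] := sg_top Hi'.
have [_ H2 _ _ _] := sgP.
have Hb := off_bound Hi. have Hb' := off_bound Hi'.
have Ha := tr_n1 (Hu Hi). have Ha' := tr_n1 (Hu Hi').
have := H2 (off us i + tn (nt us i)) (off us i' + tn (nt us i')) ltac:(lia) ltac:(lia).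
rewrite T1 T2 E => /(_ erefl) /(congr1 (blk us)). rewrite !blk_off //; lia.
Qed.

Lemma preimage i z : i < size us -> 1 <= z <= tn (nt vs (jf i)) ->
  exists2 w, 1 <= w <= tn (nt us i) & sg (off us i + w) = off vs (jf i) + z.
Proof.
move=> Hi Hz. have [Hji _] := sg_top Hi. have Hb' := off_bound Hji.
have [_ _ H3 _ _] := sgP.
have [x Hx Ex] := H3 (off vs (jf i) + z) ltac:(rewrite -ES; lia).
case: (decN Hx) => [Exn|[i' [w [Hi' Hw Exw]]]].
  by move: Ex; rewrite Exn sgN; rewrite -ES; lia.
have [h1 h2 h3] := blockmap Hi' Hw.
move: Ex; rewrite Exw h3 => E.
have Ej : jf i' = jf i.
  have := congr1 (blk vs) E. by rewrite !blk_off //; lia.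
have Eii := jf_inj Hi' Hi Ej. subst i'.
exists w => //. rewrite h3. lia.
Qed.

Lemma jf_surj j : j < size vs -> exists2 i, i < size us & jf i = j.
Proof.
move=> Hj. have Hb' := off_bound Hj. have Ha := tr_n1 (Hv Hj).
have [_ _ H3 _ _] := sgP.
have [x Hx Ex] := H3 (off vs j + tn (nt vs j)) ltac:(rewrite -ES; lia).
case: (decN Hx) => [Exn|[i [w [Hi Hw Exw]]]].
  by move: Ex; rewrite Exn sgN; rewrite -ES; lia.
have [h1 h2 h3] := blockmap Hi Hw.
move: Ex; rewrite Exw h3 => E.
exists i => //. have := congr1 (blk vs) E. by rewrite !blk_off //; lia.
Qed.

Lemma size_eq : size us = size vs.
Proof.
apply/eqP; rewrite eqn_leq; apply/andP; split.
- apply: (@inj_le 0 _ 0 _ jf) => [x Hx|x y Hx Hy]; last exact: jf_inj.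
  by have [] := sg_top (i := x) ltac:(lia).
- apply: (@surj_le 0 _ 0 _ jf) => y Hy. have [i Hi Ei] := jf_surj (j := y) ltac:(lia).
  exists i => //.
Qed.

Definition sgi i y := sg (off us i + y) - off vs (jf i).

Lemma block_iso i : i < size us -> isoT (nt us i) (nt vs (jf i)) (sgi i).
Proof.
move=> Hi. have [Hji _] := sg_top Hi.
have Hb := off_bound Hi. have Hb' := off_bound Hji.
have [_ H2 _ H4 H5] := sgP.
have Hinj : forall y y', 1 <= y <= tn (nt us i) -> 1 <= y' <= tn (nt us i) ->
    sgi i y = sgi i y' -> y = y'.
  move=> y y' Hy Hy' E. have [_ _ e1] := blockmap Hi Hy. have [_ _ e2] := blockmap Hi Hy'.
  have := H2 (off us i + y) (off us i + y') ltac:(lia) ltac:(lia).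
  rewrite e1 e2 -/(sgi i y) -/(sgi i y') E => /(_ erefl). lia.
have Ea : tn (nt us i) = tn (nt vs (jf i)).
  apply/eqP; rewrite eqn_leq; apply/andP; split.
  - apply: (@inj_le 1 _ 1 _ (sgi i)) => [y Hy|y y' Hy Hy']; last by apply: Hinj; lia.
    have [_ h _] := blockmap Hi (y := y) ltac:(lia). rewrite /sgi; lia.
  - apply: (@surj_le 1 _ 1 _ (sgi i)) => z Hz.
    have [w Hw Ew] := preimage Hi (z := z) ltac:(lia).
    exists w; first lia. by rewrite /sgi Ew addKn.
split => //. rewrite -Ea in Hb'. split.
- move=> y Hy. have [_ h _] := blockmap Hi Hy. rewrite /sgi -Ea in h *. lia.
- exact: Hinj.
- move=> z Hz. have [w Hw Ew] := preimage Hi (z := z) ltac:(rewrite -Ea; lia).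
  exists w => //. by rewrite /sgi Ew addKn.
- move=> z; split.
  + move=> HL. have Hz := tr_L (Hv Hji) HL.
    have : tL (graft vs) (off vs (jf i) + z) by rewrite tL_graft_off.
    move=> /H4 [x HLx Ex]. have := HLx; rewrite tL_graft => /andP [Hx _].
    have [i' [w [Hi' Hw Exw]]] := dec (x := x) (us := us) ltac:(lia).
    have [h1 h2 h3] := blockmap Hi' Hw.
    move: Ex; rewrite Exw h3 => E.
    have Ej : jf i' = jf i.
      have := congr1 (blk vs) E. by rewrite !blk_off //; lia.
    have Eii := jf_inj Hi' Hi Ej. subst i'.
    exists w; first by move: HLx; rewrite Exw tL_graft_off.
    rewrite /sgi; lia.
  + move=> [w HL <-]. have Hw := tr_L (Hu Hi) HL.
    have [h1 h2 h3] := blockmap Hi Hw.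
    have : tL (graft vs) (sg (off us i + w)).
      apply/H4; exists (off us i + w) => //. by rewrite tL_graft_off.
    by rewrite h3 tL_graft_off // -Ea.
- move=> y Hy. have Hy1 : 1 <= y <= tn (nt us i) by lia.
  have [h1 h2 h3] := blockmap Hi Hy1.
  have Hs := tr_s (Hu Hi) Hy.
  have := sg_s (x := off us i + y) ltac:(lia).
  rewrite h3 (ts_graft_off h1 h2) (ts_graft_off Hi Hy1).
  have -> : (y == tn (nt us i)) = false by lia.
  have [k1 k2 k3] := blockmap Hi (y := ts (nt us i) y) ltac:(lia).
  case: eqP => Hq.
  + move=> E. have := sg_rng (x := off us i + ts (nt us i) y) ltac:(lia). rewrite -E -ES. lia.
  + rewrite k3 => E. rewrite /sgi. lia.
Qed.

Lemma graft_decomp : size us = size vs /\ exists rho : nat -> nat,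
  [/\ (forall j, j < size vs -> rho j < size vs),
      (forall j j', j < size vs -> j' < size vs -> rho j = rho j' -> j = j') &
      (forall j, j < size vs -> iso (nt us (rho j)) (nt vs j))].
Proof.
have Es := size_eq. split => //.
pose rho j := find (fun i => jf i == j) (iota 0 (size us)).
have Hr : forall j, j < size vs -> rho j < size us /\ jf (rho j) = j.
  move=> j Hj. have [i Hi Ei] := jf_surj Hj.
  have Hh : has (fun i => jf i == j) (iota 0 (size us)).
    apply/hasP; exists i; last by rewrite Ei. by rewrite mem_iota; lia.
  have := nth_find 0 Hh. rewrite has_find size_iota in Hh.
  rewrite nth_iota // add0n => /eqP E. by [].
exists rho; split.
- move=> j Hj. rewrite -Es. by case: (Hr j Hj).
- move=> j j' Hj Hj' E. by rewrite -(proj2 (Hr j Hj)) -(proj2 (Hr j' Hj')) E.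
- move=> j Hj. have [h1 h2] := Hr j Hj. exists (sgi (rho j)).
  by rewrite -{2}h2; apply: block_iso.
Qed.

End Dec.

Lemma root_leaf t : is_tree t -> tL t (tn t) -> tn t = 1.
Proof.
move=> Ht HL. have Hn := tr_n1 Ht. case: (ltnP 1 (tn t)) => H; last lia.
have Hs := tr_s Ht (x := (tn t).-1) ltac:(lia).
have := tr_sL Ht (x := (tn t).-1) ltac:(lia).
have -> : ts t (tn t).-1 = tn t by lia. by rewrite HL.
Qed.

Lemma iso_sim n : forall t u, tn t <= n -> is_tree t -> is_tree u -> iso t u -> sim t u.
Proof.
elim: n => [|n IH] t u Hn Ht Hu [sg Hsg].
  have := tr_n1 Ht; lia.
have Hr := iso_root Ht Hu Hsg.
have Hsg0 := Hsg. case: Hsg0 => En [H1 H2 H3 H4 H5].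
have Hn1 := tr_n1 Ht.
case: (boolP (tL t (tn t))) => HLt.
  have E1 := root_leaf Ht HLt.
  have -> : u = t.
    apply: tree_eq; first by rewrite En.
    - move=> x. rewrite (tr_s0 Hu) ?(tr_s0 Ht) // -?En E1 /=; lia.
    - move=> x. apply/idP/idP.
      + move/H4 => [y Hy <-]. have := tr_L Ht Hy. rewrite E1 => Hy1.
        have Ey : y = tn t by lia. by rewrite Ey Hr -Ey.
      + move=> Hx. have := tr_L Ht Hx. rewrite E1 => Hx1.
        apply/H4; exists x => //. have Ex : x = tn t by lia. by rewrite Ex Hr.
  exact: sim_refl.
have HLu : ~~ tL u (tn u).
  apply/negP => /H4 [y Hy Ey]. have Hy1 := tr_L Ht Hy.
  have : y = tn t by apply: H2 => //; [lia | rewrite Ey Hr].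
  by move=> E; move: HLt; rewrite -E Hy.
have Hsg' : isoT (graft (succs t)) (graft (succs u)) sg.
  by rewrite graft_succs // graft_succs.
have [Es [rho [R1 R2 R3]]] := graft_decomp (allv_succs Ht) (allv_succs Hu) Hsg'.
have Rlt : forall k : 'I_(size (succs t)), rho k < size (succs t).
  move=> k; have h1 := ltn_ord k. have := R1 k. lia.
pose f (k : 'I_(size (succs t))) : 'I_(size (succs t)) := Ordinal (Rlt k).
have f_inj : injective f.
  move=> a b /(congr1 val) /= E. apply: val_inj. apply: R2 => //.
  - by case: (a) => a' Ha /=; lia.
  - by case: (b) => b' Hb /=; lia.
pose tau := perm f_inj.
apply: sim_trans (sim_perm tau Ht HLt) _.
have [Hp _] := @perm_iso t tau Ht HLt.
have Hw := @perm_valid t tau Ht.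
apply: sim_cong => //.
- by rewrite /perm_tree tL_graft tn_graft ltnn.
- by rewrite /perm_tree succs_graft // size_map size_enum_ord Es.
- move=> i. rewrite /perm_tree succs_graft // size_map size_enum_ord => Hi.
  rewrite nt_perm permE /=.
  have Hi' : i < size (succs u) by rewrite -Es.
  have [sg2 [E2 Hsg2]] := R3 i Hi'.
  split => //.
  apply: IH.
  + have := off_bound (Rlt (Ordinal Hi)). rewrite sz_succs //= => ?. lia.
  + exact: (allv_succs Ht (Rlt (Ordinal Hi))).
  + exact: (allv_succs Hu Hi').
  + by exists sg2.
Qed.

Theorem lemma4 (n : nat) (s s' : nat -> nat) (L L' : nat -> bool) :
  is_tree (Tree n s L) -> is_tree (Tree n s' L') ->
  (sim (Tree n s L) (Tree n s' L') <->
   exists sigma : nat -> nat,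
     [/\ (forall x, 1 <= x <= n -> 1 <= sigma x <= n),
         (forall x y, 1 <= x <= n -> 1 <= y <= n -> sigma x = sigma y -> x = y),
         (forall y, 1 <= y <= n -> exists2 x, 1 <= x <= n & sigma x = y),
         (forall y, L' y <-> exists2 x, L x & sigma x = y) &
         (forall i, 1 <= i <= n.-1 -> s' (sigma i) = sigma (s i))]).
Proof.
move=> Ht Hu; split.
- move=> /sim_fwd [_ [_ [sg [_ H]]]]. by exists sg.
- move=> [sg H]. apply: (@iso_sim n) => //. by exists sg.
Qed.
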